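(* Let $(X,b)$ be a locally finite weighted graph all of whose connected components are infinite, and let $V\colon X\to\mathbb R$ be such that for every $x\in X$ either $V(x)\ge0$ or $V(x)+2\deg(x)\le0$. Then $\mathcal L_V\colon C(X)\to C(X)$ is surjective.
   Context: Weighted graph: $X$ countable, $b\colon X\times X\to[0,\infty)$ with $b(x,x)=0$, $b(x,y)=b(y,x)$, $\deg(x)=\sum_y b(x,y)<\infty$; locally finite means each vertex has finitely many $y$ with $b(x,y)>0$. Connected components are equivalence classes of ''connected by a finite path $x_1,\dots,x_n$ with $b(x_i,x_{i+1})>0$''. $C(X)$ is the space of complex functions on $X$, and $\mathcal L_Vf(x)=\sum_y b(x,y)(f(x)-f(y))+V(x)f(x)$. *)

(* Defs.v *)
From HB Require Import structures.
From mathcomp Require Import all_boot all_order all_algebra.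
From mathcomp Require Import boolp classical_sets functions cardinality fsbigop reals.
From mathcomp Require Import complex.
Set Implicit Arguments. Unset Strict Implicit. Unset Printing Implicit Defensive.
Import Order.TTheory GRing.Theory Num.Theory.
Local Open Scope classical_set_scope.
Local Open Scope ring_scope.
Local Open Scope complex_scope.

Definition weighted_graph (R : realType) (X : countType) (b : X -> X -> R) :=
  (forall x y, 0 <= b x y) /\ (forall x, b x x = 0) /\ (forall x y, b x y = b y x).

Definition locally_finite (R : realType) (X : countType) (b : X -> X -> R) :=
  forall x, finite_set [set y | 0 < b x y].

Definition deg (R : realType) (X : countType) (b : X -> X -> R) (x : X) : R :=
  \sum_(y \in [set: X]) b x y.

Definition gconnected (R : realType) (X : countType) (b : X -> X -> R) (x y : X) :=
  exists s : seq X, path (fun u v => 0 < b u v) x s /\ last x s = y.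

Definition all_components_infinite (R : realType) (X : countType) (b : X -> X -> R) :=
  forall x, infinite_set [set y | gconnected b x y].

(* The Schroedinger operator L_V on C(X) = X -> R[i]:
   L_V f x = sum_y b(x,y) (f x - f y) + V x f x *)
Definition schrod (R : realType) (X : countType) (b : X -> X -> R) (V : X -> R)
  (f : X -> R[i]) (x : X) : R[i] :=
  (\sum_(y \in [set: X]) ((b x y)%:C * (f x - f y))) + (V x)%:C * f x.

(* Main.v *)
Require Import Defs.
From HB Require Import structures.
From mathcomp Require Import all_boot all_order all_algebra.
From mathcomp Require Import boolp classical_sets functions cardinality fsbigop reals.
From mathcomp Require Import complex.
From mathcomp Require Import lra ring.
Import Order.TTheory GRing.Theory Num.Theory.
Set Implicit Arguments. Unset Strict Implicit.
Local Open Scope classical_set_scope.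
Local Open Scope ring_scope.
Local Open Scope complex_scope.

Lemma sumS (T : choiceType) (M : nmodType) (r : seq T) (F : T -> M) :
  uniq r -> (forall y, y \notin r -> F y = 0) ->
  \sum_(y \in [set: T]) F y = \sum_(y <- r) F y.
Proof.
move=> ur F0; rewrite [RHS]fsbig_seq //; symmetry.
by apply: fsbig_widen => // y [_ /= yr]; apply: F0; apply/negP.

Qed.

Definition nbrs (R : realType) (X : countType) (b : X -> X -> R) (x : X) : seq X :=
  finmap.enum_fset (fset_set [set y | 0 < b x y]).

Lemma nbrs_uniq (R : realType) (X : countType) (b : X -> X -> R) x : uniq (nbrs b x).
Proof. exact: finmap.fset_uniq. Qed.

Lemma mem_nbrs (R : realType) (X : countType) (b : X -> X -> R) x y :
  locally_finite b -> (y \in nbrs b x) = (0 < b x y).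
Proof. move=> lf; have := in_fset_set (lf x) y. rewrite /nbrs => ->.
by apply/idP/idP => [/set_mem|h] //; apply: mem_set. Qed.

Lemma sumN (R : realType) (X : countType) (b : X -> X -> R) (M : nmodType) (F : X -> M) x :
  weighted_graph b -> locally_finite b -> (forall y, b x y = 0 -> F y = 0) ->
  \sum_(y \in [set: X]) F y = \sum_(y <- nbrs b x) F y.
Proof.
move=> [b0 _] lf F0; apply: sumS; first exact: nbrs_uniq.
move=> y; rewrite mem_nbrs // => h; apply: F0.
by apply/eqP; rewrite eq_le b0 andbT leNgt h.
Qed.

Lemma schrodE (R : realType) (X : countType) (b : X -> X -> R) V f x :
  weighted_graph b -> locally_finite b ->
  schrod b V f x = (deg b x + V x)%:C * f x - \sum_(y <- nbrs b x) (b x y)%:C * f y.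
Proof.
move=> wg lf; rewrite /schrod /deg (sumN (b:=b) (x:=x)) //; last by move=> y ->; rewrite mul0r.
rewrite (sumN (b:=b) (x:=x) (F := b x)) //.
rewrite rmorphD rmorph_sum /= mulrDl mulr_suml.
under eq_bigr do rewrite mulrBr.
by rewrite sumrB addrAC.
Qed.

Lemma argmax (T : eqType) (D : numDomainType) (F : T -> D) (s : seq T) :
  (forall y, 0 <= F y) -> s != [::] ->
  exists2 x, x \in s & forall y, y \in s -> F y <= F x.
Proof.
move=> F0; elim: s => [//|a s IH] _.
case: (eqVneq s [::]) => [->|sn].
  by exists a; rewrite ?mem_seq1 // => y; rewrite mem_seq1 => /eqP ->.
have [x xs Hx] := IH sn.
have := real_leVge (ger0_real (F0 a)) (ger0_real (F0 x)); case/orP => h.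
  exists x; first by rewrite inE xs orbT.
  by move=> y; rewrite inE => /orP[/eqP ->|/Hx].
exists a; first by rewrite inE eqxx.
by move=> y; rewrite inE => /orP[/eqP ->//|/Hx/le_trans]; apply.
Qed.

Lemma path_prop (T : Type) (e : rel T) (P : T -> Prop) x p :
  (forall u v, P u -> e u v -> P v) -> path e x p -> P x -> P (last x p).
Proof.
move=> He; elim: p x => [//|y p IH] x /= /andP[exy pp] Px.
by apply: IH => //; apply: He exy.
Qed.

Lemma deg_ge0 (R : realType) (X : countType) (b : X -> X -> R) x :
  weighted_graph b -> locally_finite b -> 0 <= deg b x.
Proof.
move=> wg lf; rewrite /deg (sumN (b:=b) (x:=x)) //; try by move=> y ->.
by apply: sumr_ge0 => y _; case: wg => b0 _; apply: b0.
Qed.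

Lemma maxp (R : realType) (X : countType) (b : X -> X -> R) (V : X -> R)
  (s : seq X) (phi : X -> R[i]) :
  weighted_graph b -> locally_finite b -> all_components_infinite b ->
  (forall x, 0 <= V x \/ V x + 2 * deg b x <= 0) ->
  (forall y, y \notin s -> phi y = 0) ->
  (forall x, x \in s -> schrod b V phi x = 0) -> forall y, phi y = 0.
Proof.
move=> wg lf inf hV out sol z; apply/eqP/negPn/negP => nz.
have zs : z \in s by apply/negPn/negP => /out/eqP; apply/negP.
have sn : s != [::] by apply/eqP => s0; rewrite s0 in zs.
have [x xs Hx] := argmax (fun y => normr_ge0 (phi y)) sn.
set M := `|phi x| in Hx.
have Mpos : 0 < M by apply: lt_le_trans (Hx _ zs); rewrite normr_gt0.
have bound : forall y, `|phi y| <= M.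
  move=> y; case: (boolP (y \in s)) => [/Hx//|/out ->]; by rewrite normr0 ltW.
have b0 : forall u v, 0 <= b u v by case: wg.
have closure : forall u v, `|phi u| = M -> 0 < b u v -> `|phi v| = M.
  move=> u v uM buv.
  have us : u \in s by apply/negPn/negP => /out; move: uM => /[swap] ->; rewrite normr0 => M0; rewrite -M0 ltxx in Mpos.
  have := sol u us; rewrite schrodE // => /eqP; rewrite subr_eq0 => /eqP E.
  have degE : deg b u = \sum_(y <- nbrs b u) b u y.
    by rewrite /deg (sumN (b:=b) (x:=u)) //; try by move=> y ->.
  have key : \sum_(y <- nbrs b u) (b u y)%:C * (M - `|phi y|) <= 0.
    have h1 : `|(deg b u + V u)%:C * phi u| <= \sum_(y <- nbrs b u) (b u y)%:C * `|phi y|.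
      rewrite E; apply: le_trans (ler_norm_sum _ _ _) _.
      apply: ler_sum => y _; rewrite normrM ger0_norm //; by rewrite ler0c.
    have h2 : (deg b u)%:C * M <= `|(deg b u + V u)%:C * phi u|.
      rewrite normrM uM ler_pM2r //.
      have dg := deg_ge0 u wg lf.
      case: (hV u) => hv.
        rewrite ger0_norm; first by rewrite lecR lerDl.
        by rewrite ler0c addr_ge0.
      rewrite ler0_norm; last by rewrite -(rmorph0 (real_complex R)) lecR; lra.
      by rewrite -rmorphN lecR; lra.
    have := le_trans h2 h1.
    rewrite degE rmorph_sum mulr_suml -subr_le0 -sumrB.
    by under eq_bigr do rewrite -mulrBr.
  have all0 : \sum_(y <- nbrs b u) (b u y)%:C * (M - `|phi y|) == 0.
    rewrite eq_le key /=; apply: sumr_ge0 => y _; apply: mulr_ge0.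
      by rewrite ler0c.
    by rewrite subr_ge0.
  rewrite psumr_eq0 in all0; last first.
    move=> y _; apply: mulr_ge0; first by rewrite ler0c.
    by rewrite subr_ge0.
  have vN : v \in nbrs b u by rewrite mem_nbrs.
  move/allP: all0 => /(_ v vN) /=; rewrite mulf_eq0 => /orP[|].
    by rewrite -(rmorph0 (real_complex R)) => /eqP/complexI buv0; rewrite buv0 ltxx in buv.
  by rewrite subr_eq0 => /eqP <-.
have sub : [set y | gconnected b x y] `<=` [set` s].
  move=> y [p [pp <-]] /=.
  have : `|phi (last x p)| = M.
    by apply: (path_prop (P := fun y => `|phi y| = M)) pp _ => // u v uM; apply: closure.
  move=> lM; apply/negPn/negP => /out ln; rewrite ln normr0 in lM.
  by rewrite -lM ltxx in Mpos.
by apply: (inf x); apply: sub_finite_set sub _; apply: finite_seq.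
Qed.

Lemma fin (R : realType) (X : countType) (b : X -> X -> R) (V : X -> R) :
  weighted_graph b -> locally_finite b -> all_components_infinite b ->
  (forall x, 0 <= V x \/ V x + 2 * deg b x <= 0) ->
  forall (E : seq X) (g : X -> R[i]),
  exists h : X -> R[i], forall x, x \in E -> schrod b V h x = g x.
Proof.
move=> wg lf inf hV E g.
set s := undup E; have us : uniq s := undup_uniq E.
set n := size s; set t := in_tuple s.
pose A x y := (if x == y then (deg b x + V x)%:C else 0) - (b x y)%:C.
have I1 : forall phi : X -> R[i], (forall y, y \notin s -> phi y = 0) ->
    forall x, x \in s -> schrod b V phi x = \sum_(y <- s) A x y * phi y.
  move=> phi phi0 x xs; rewrite schrodE //.
  under [RHS]eq_bigr do rewrite mulrBl.
  rewrite sumrB [X in _ = X - _](bigD1_seq x) //= /A eqxx.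
  rewrite [X in _ = _ + X - _]big1 ?addr0; last first.
    by move=> y /negbTE; rewrite eq_sym => ->; rewrite mul0r.
  congr (_ - _).
  rewrite -(sumN (b:=b) (x:=x) (F := fun y => (b x y)%:C * phi y)) //; last first.
    by move=> y ->; rewrite mul0r.
  by rewrite (sumS (r:=s)) // => y /phi0 ->; rewrite mulr0.
pose phiu (u : 'rV[R[i]]_n) y := \sum_(i < n) (if tnth t i == y then u 0 i else 0).
have P1 : forall u y, y \notin s -> phiu u y = 0.
  move=> u y ys; apply: big1 => i _; case: eqP => // e.
  by move: ys; rewrite -e mem_tnth.
have P2 : forall u j, phiu u (tnth t j) = u 0 j.
  move=> u j; rewrite /phiu (bigD1 j) //= eqxx big1 ?addr0 // => i /negbTE ij.
  have inj : injective (tnth t) by apply/tuple_uniqP.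
  by case: eqP => // /inj e; rewrite e eqxx in ij.
pose M : 'M[R[i]]_n := \matrix_(i, j) A (tnth t j) (tnth t i).
have P3 : forall u j, (u *m M) 0 j = schrod b V (phiu u) (tnth t j).
  move=> u j; rewrite (I1 _ (P1 u)); last exact: mem_tnth.
  rewrite big_tnth !mxE; apply: eq_bigr => i _.
  by rewrite P2 mxE mulrC.
have unit : M \in unitmx.
  rewrite unitmxE unitfE; apply/negP => /det0P [v vn vM].
  have z : forall y, phiu v y = 0.
    apply: (maxp (s := s) wg lf inf hV); first exact: P1.
    move=> x xs.
    have [k ->] := seq_tnthP xs.
    by rewrite -P3 vM mxE.
  move/negP: vn; apply; apply/eqP/rowP => j; rewrite -P2 z mxE //.
pose w : 'rV[R[i]]_n := \row_j g (tnth t j).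
exists (phiu (w *m invmx M)) => x xE.
have xs : x \in s by rewrite mem_undup.
have [j ->] := seq_tnthP xs.
by rewrite -P3 mulmxKV // mxE.
Qed.

Lemma schrod_lin (R : realType) (X : countType) (b : X -> X -> R) (V : X -> R)
  (f1 f2 : X -> R[i]) (t : R[i]) x :
  weighted_graph b -> locally_finite b ->
  schrod b V (fun y => f1 y + t * (f2 y - f1 y)) x =
  schrod b V f1 x + t * (schrod b V f2 x - schrod b V f1 x).
Proof.
move=> wg lf; rewrite !schrodE //.
set c := (deg b x + V x)%:C.
transitivity (c * (f1 x + t * (f2 x - f1 x)) -
  \sum_(y <- nbrs b x) ((b x y)%:C * f1 y + t * ((b x y)%:C * f2 y - (b x y)%:C * f1 y))).
  by congr (_ - _); apply: eq_bigr => y _; ring.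
rewrite big_split /= -mulr_sumr sumrB; ring.
Qed.

Lemma schrod_loc (R : realType) (X : countType) (b : X -> X -> R) (V : X -> R)
  (f h : X -> R[i]) x :
  weighted_graph b -> locally_finite b ->
  (forall y, y \in x :: nbrs b x -> f y = h y) ->
  schrod b V f x = schrod b V h x.
Proof.
move=> wg lf E; rewrite !schrodE // E ?mem_head //; congr (_ - _).
by apply: eq_big_seq => y yN; rewrite E // inE yN orbT.
Qed.

Lemma bound_pickle (X : countType) (r : seq X) :
  exists m, forall y, y \in r -> (pickle y < m)%N.
Proof.
elim: r => [|a r [m Hm]]; first by exists 0%N.
exists (maxn m (pickle a).+1) => y; rewrite inE => /orP[/eqP ->|/Hm h].
  by rewrite leq_max leqnn orbT.
by rewrite leq_max h.
Qed.

Definition Good (R : realType) (X : countType) (b : X -> X -> R) (V : X -> R)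
  (g : X -> R[i]) (n : nat) (p : X -> R[i]) :=
  forall E : seq X, exists h : X -> R[i],
    (forall x, x \in E -> schrod b V h x = g x) /\
    (forall x, (pickle x < n)%N -> h x = p x).

Lemma step (R : realType) (X : countType) (b : X -> X -> R) (V : X -> R) g n p :
  weighted_graph b -> locally_finite b -> Good b V g n p ->
  exists p', Good b V g n.+1 p' /\ forall x, (pickle x < n)%N -> p' x = p x.
Proof.
move=> wg lf G.
have [[x0 px0]|nx] := pselect (exists x0 : X, pickle x0 = n); last first.
  exists p; split => // E; have [h [h1 h2]] := G E; exists h; split => // x.
  rewrite ltnS leq_eqVlt => /orP[/eqP e|]; last exact: h2.
  by exfalso; apply: nx; exists x.
pose Adm c := forall E : seq X, exists h : X -> R[i],
  [/\ forall x, x \in E -> schrod b V h x = g x,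
      forall x, (pickle x < n)%N -> h x = p x & h x0 = c].
have [[c Ac]|nA] := pselect (exists c, Adm c).
  exists (fun x => if x == x0 then c else p x); split; last first.
    move=> x xn; case: eqP => // e; by rewrite e px0 ltnn in xn.
  move=> E; have [h [h1 h2 h3]] := Ac E; exists h; split => // x.
  case: eqP => [->//|ne].
  rewrite ltnS leq_eqVlt => /orP[/eqP e|]; last exact: h2.
  by exfalso; apply: ne; apply: (pcan_inj (@pickleK X)); rewrite e px0.
have H : forall c, exists E : seq X, forall h : X -> R[i],
    (forall x, x \in E -> schrod b V h x = g x) ->
    (forall x, (pickle x < n)%N -> h x = p x) -> h x0 <> c.
  move=> c; apply: contrapT => nE; apply: nA; exists c => E.
  apply: contrapT => nh; apply: nE; exists E => h s1 s2 s3; apply: nh.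
  by exists h.
have [E1 HE1] := H 0.
have [h1 [s1 a1]] := G E1.
have [E2 HE2] := H (h1 x0).
have [h3 [s3 a3]] := G (E1 ++ E2).
have ne : h3 x0 - h1 x0 != 0.
  rewrite subr_eq0; apply/eqP; apply: (HE2 h3) => // x xE; apply: s3.
  by rewrite mem_cat xE orbT.
pose t := (0 - h1 x0) / (h3 x0 - h1 x0).
exfalso; refine (HE1 (fun y => h1 y + t * (h3 y - h1 y)) _ _ _).
- move=> x xE; rewrite schrod_lin // s1 // s3 ?mem_cat ?xE //.
  by rewrite subrr mulr0 addr0.
- by move=> x xn; rewrite a1 // a3 // subrr mulr0 addr0.
- by rewrite /t divfK // addrC subrK.
Qed.
Close Scope complex_scope. Close Scope classical_set_scope.
Unset Implicit Arguments.

Theorem corollary4p8 (R : realType) (X : countType) (b : X -> X -> R) (V : X -> R) :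
  weighted_graph b -> locally_finite b -> all_components_infinite b ->
  (forall x, 0 <= V x \/ V x + 2 * deg b x <= 0) ->
  forall g : X -> R[i], exists f : X -> R[i], schrod b V f = g.
Proof.
move=> wg lf inf hV g.
have step' : forall q : nat * (X -> R[i]), exists p',
    Good b V g q.1 q.2 -> Good b V g q.1.+1 p' /\
    forall x, (pickle x < q.1)%N -> p' x = q.2 x.
  move=> [n p] /=; case: (pselect (Good b V g n p)) => G.
    by have [p' Hp] := step wg lf G; exists p'.
  by exists p.
have [F HF] := choice step'.
pose P := fix P n := if n is m.+1 then F (m, P m) else (fun _ : X => 0 : R[i]).
have GP : forall n, Good b V g n (P n).
  elim=> [|n IH].
    move=> E; have [h Hh] := fin wg lf inf hV E g; exists h; split => //.
  exact: (HF (n, P n) IH).1.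
have agr : forall n x, (pickle x < n)%N -> P n.+1 x = P n x.
  by move=> n x; exact: (HF (n, P n) (GP n)).2.
have stab : forall k m x, (pickle x < m)%N -> P (m + k)%N x = P m x.
  elim=> [|k IH] m x xm; first by rewrite addn0.
  by rewrite addnS agr ?IH // (leq_trans xm) // leq_addr.
exists (fun x => P (pickle x).+1 x); apply/funext => x.
have [m Hm] := bound_pickle (x :: nbrs b x).
have [h [h1 h2]] := GP m [:: x].
rewrite -(h1 x) ?mem_head //; apply: schrod_loc => // y yr.
have ym := Hm y yr; rewrite h2 //.
by rewrite -(subnKC ym) stab.
Qed.
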